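(* Let $G=(V,E)$ be a graph and let $u_1\in V$ be a universal vertex (adjacent to all other vertices). (1) If $G$ has another universal vertex $u_2\neq u_1$, then the perfect dominating sets of $G$ are exactly $V$ and the singletons $\{u\}$ with $u$ a universal vertex of $G$. (2) If $u_1$ is the unique universal vertex of $G$, then every perfect dominating set of $G$ contains $u_1$. Moreover, let $G_1=(V_1,E_1),\dots,G_k=(V_k,E_k)$ be the connected components of $G-u_1$. Then (a) every perfect dominating set $D$ of $G$ satisfies, for each $i$ and each $w\in V_i$: $w\in D$ if and only if $V_i\subseteq D$ (i.e., each $V_i$ is either contained in $D$ or disjoint from $D$); and (b) every subset $V'\subseteq V$ that contains $u_1$ and satisfies the property in (a) is a perfect dominating set of $G$.
   Context: A perfect dominating set of a graph $G$ is a set $D\subseteq V(G)$ such that every vertex $v\in V(G)\setminus D$ is adjacent to exactly one vertex of $D$. *)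

(* Defs.v *)
(* A simple graph is a symmetric irreflexive relation e on a finType T. *)
From mathcomp Require Import all_boot.
Set Implicit Arguments. Unset Strict Implicit. Unset Printing Implicit Defensive.

Definition universal (T : finType) (e : rel T) (u : T) : Prop :=
  forall v, v != u -> e u v.

Definition perfect_dominating (T : finType) (e : rel T) (D : {set T}) : Prop :=
  forall v, v \notin D -> #|[set w in D | e v w]| = 1.

Definition del_rel (T : finType) (e : rel T) (u : T) : rel T :=
  fun x y => [&& x != u, y != u & e x y].

(* vertex set of the connected component of G - u containing w (for w != u) *)
Definition comp_del (T : finType) (e : rel T) (u w : T) : {set T} :=
  [set w' | connect (del_rel e u) w w'].

(* D is a union of connected components of G - u: for each w != u,
   w \in D iff the whole component of w is contained in D *)
Definition component_closed (T : finType) (e : rel T) (u : T) (D : {set T}) : Prop :=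
  forall w, w != u -> (w \in D <-> comp_del e u w \subset D).

(* Main.v *)
Require Import Defs.
From mathcomp Require Import all_boot.

Lemma two_in_one (T : finType) (S : {set T}) a b :
  a \in S -> b \in S -> a != b -> #|S| = 1 -> False.
Proof.
move=> aS bS ab hS.
have : #|[set a; b]| <= #|S|.
  apply: subset_leq_card; apply/subsetP => x; rewrite !inE => /orP[/eqP->|/eqP->] //.
by rewrite cards2 ab hS.
Qed.

Lemma pd_out {T : finType} {e : rel T} (e_sym : symmetric e) (u : T) (D : {set T}) :
  perfect_dominating e D -> universal e u -> u \notin D ->
  exists w, D = [set w] /\ universal e w.
Proof.
move=> hD hu uD.
have E : [set w in D | e u w] = D.
  apply/setP => w; rewrite inE; case wD: (w \in D) => //=.
  apply: hu; apply/eqP => wu; subst; by rewrite wD in uD.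
have := hD u uD; rewrite E => /eqP/cards1P [w Dw].
exists w; split => // v vw.
have vD : v \notin D by rewrite Dw inE.
have := hD v vD => h1.
have : 0 < #|[set x in D | e v x]| by rewrite h1.
rewrite card_gt0 => /set0Pn [x]; rewrite inE Dw inE => /andP[/eqP -> ewv].
by rewrite e_sym.
Qed.

Theorem lemma5 (T : finType) (e : rel T) (e_sym : symmetric e) (e_irr : irreflexive e)
    (u1 : T) (hu1 : universal e u1) :
  (forall u2, u2 != u1 -> universal e u2 ->
     forall D : {set T}, perfect_dominating e D <->
       (D = [set: T] \/ exists u, universal e u /\ D = [set u]))
  /\
  ((forall u, universal e u -> u = u1) ->
     (forall D : {set T}, perfect_dominating e D -> u1 \in D)
     /\ (forall D : {set T}, perfect_dominating e D -> component_closed e u1 D)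
     /\ (forall D : {set T}, u1 \in D -> component_closed e u1 D -> perfect_dominating e D)).
Proof.
split.
  move=> u2 u21 hu2 D; split.
    move=> hD.
    case: (boolP (u1 \in D)) => u1D; last first.
      have [w [-> hw]] := @pd_out _ _ e_sym _ _ hD hu1 u1D; right; by exists w.
    case: (boolP (u2 \in D)) => u2D; last first.
      have [w [-> hw]] := @pd_out _ _ e_sym _ _ hD hu2 u2D; right; by exists w.
    left; apply/setP => v; rewrite inE; apply/negPn/negP => vD.
    have v1 : v != u1 by apply/eqP => h; subst; rewrite u1D in vD.
    have v2 : v != u2 by apply/eqP => h; subst; rewrite u2D in vD.
    apply: (@two_in_one _ _ _ _ _ _ u21 (hD v vD)); rewrite inE ?u1D ?u2D /= e_sym.
      by apply: hu2.
    by apply: hu1.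
  case=> [-> v|[u [hu ->]] v]; first by rewrite inE.
  rewrite inE => vu.
  have -> : [set w in [set u] | e v w] = [set u].
    apply/setP => w; rewrite !inE; case: (eqVneq w u) => //= ->.
    by rewrite e_sym; apply: hu.
  by rewrite cards1.
move=> huniq.
have part_a : forall D : {set T}, perfect_dominating e D -> u1 \in D.
  move=> D hD; apply/negPn/negP => u1D.
  have [w [Dw hw]] := @pd_out _ _ e_sym _ _ hD hu1 u1D.
  by rewrite Dw (huniq _ hw) inE eqxx in u1D.
split => //; split.
  move=> D hD w wu; split; last first.
    by move/subsetP; apply; rewrite inE connect0.
  move=> wD; apply/subsetP => y; rewrite inE.
  have cl : closed (del_rel e u1) (mem D).
    have step : forall x y, del_rel e u1 x y -> x \in D -> y \in D.
      move=> x z /and3P[xu zu exz] xD; apply/negPn/negP => zD.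
      apply: (@two_in_one _ _ _ _ _ _ xu (hD z zD)); rewrite inE ?xD ?(part_a D hD) /=.
        by rewrite e_sym.
      by rewrite e_sym; apply: hu1.
    move=> x z hxz; apply/idP/idP; first exact: step.
    apply: step; move: hxz; rewrite /del_rel => /and3P[-> -> ]; by rewrite e_sym.
  by move=> /(closed_connect cl) <-.
move=> D u1D hc v vD.
have vu : v != u1 by apply/eqP => h; subst; rewrite u1D in vD.
have -> : [set w in D | e v w] = [set u1].
  apply/setP => w; rewrite !inE; case: (eqVneq w u1) => [->|wu] /=.
    by rewrite u1D e_sym; apply: hu1.
  case wD: (w \in D) => //=; apply/negP => evw.
  have := (proj1 (hc w wu) wD) => /subsetP /(_ v); rewrite inE.
  have c : connect (del_rel e u1) w v.
    by apply: connect1; rewrite /del_rel wu vu /= e_sym.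
  by move=> h; move: vD; rewrite h.
by rewrite cards1.
Qed.
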